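(* Let $\Im^k=(V,L)$ be the $(k+1)$-regular tree ($k\ge 1$), let $\Omega=\mathbb{Z}^V$, let $\mathcal{N}$ be the set of all finite nonempty subsets of $V$, and fix $\theta>0$. For $\Lambda\in\mathcal{N}$ and $\sigma\in\Omega$ define $$U_\Lambda(\sigma)=H_\Lambda(\sigma_\Lambda)=\sum_{j=1}^{|\Lambda|}\Big[b_j(\sigma_\Lambda)\ln\frac{\theta}{j}-\ln\big(b_j(\sigma_\Lambda)!\big)\Big],$$ where $\sigma_\Lambda$ is the restriction of $\sigma$ to $\Lambda$ and $b_j(\sigma_\Lambda)$ is the number of distinct values in $\mathbb{Z}$ that appear exactly $j$ times among $\{\sigma(x):x\in\Lambda\}$. Then the potential $U=\{U_\Lambda\}_{\Lambda\in\mathcal{N}}$ is not absolutely summable: for every $x\in V$, $$\sum_{\Lambda\in\mathcal{N},\,x\in\Lambda}\|U_\Lambda\|_\infty=\infty,\qquad \|f\|_\infty:=\sup_{\sigma\in\Omega}|f(\sigma)|.$$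
   Context: A potential $U=\{U_\Lambda\}_{\Lambda\in\mathcal N}$ is called absolutely summable if $\sum_{\Lambda\in\mathcal N,\,x\in\Lambda}\|U_\Lambda\|_\infty<\infty$ for all $x\in V$. The potential above is the one associated with the multivariate Ewens weights $\frac{1}{Z_{|\Lambda|}(\theta)}\prod_{j=1}^{|\Lambda|}(\theta/j)^{b_j(\sigma_\Lambda)}\frac{1}{b_j(\sigma_\Lambda)!}$, via $H_\Lambda=\ln$ of the unnormalized weight. *)

(* Defs.v *)
From HB Require Import structures.
From mathcomp Require Import all_boot all_order all_algebra finmap.
From mathcomp Require Import all_classical all_reals all_analysis.
Set Implicit Arguments. Unset Strict Implicit. Unset Printing Implicit Defensive.
Import Order.TTheory GRing.Theory Num.Theory.

Local Open Scope fset_scope.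
Local Open Scope ring_scope.

(* walks: x :: p is a walk along adj; non-backtracking: no a b a pattern *)
Fixpoint nonbacktracking (V : eqType) (x : V) (p : seq V) : bool :=
  match p with
  | y :: (z :: _) as q => (x != z) && nonbacktracking y q
  | _ => true
  end.

(*  simple graph, every vertex has exactly k+1 neighbours, connected, and *)
(*  no closed non-backtracking walk of positive length (acyclic).         *)
Definition is_regular_tree (V : eqType) (k : nat) (adj : rel V) : Prop :=
  [/\ (forall x, ~~ adj x x),
      (forall x y, adj x y = adj y x),
      (forall x, exists s : seq V,
          [/\ uniq s, size s = k.+1 & forall y, adj x y = (y \in s)]),
      (forall x y, exists p : seq V, path adj x p /\ last x p = y)
    & (forall x (p : seq V), path adj x p -> nonbacktracking x p ->
          last x p = x -> p = [::])].

Definition mult (V : choiceType) (L : {fset V}) (sigma : V -> int) (v : int)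
  : nat := #|` [fset y in L | sigma y == v]|.

Definition bcount (V : choiceType) (L : {fset V}) (sigma : V -> int) (j : nat)
  : nat := #|` [fset v in [fset sigma y | y in L] | mult L sigma v == j]|.

Definition ewensU (R : realType) (theta : R) (V : choiceType)
  (L : {fset V}) (sigma : V -> int) : R :=
  \sum_(1 <= j < (#|` L|).+1)
     ((bcount L sigma j)%:R * ln (theta / j%:R)
      - ln ((bcount L sigma j)`!)%:R).

Definition supnorm (R : realType) (T : Type) (f : T -> R) : \bar R :=
  ereal_sup [set (`|f s|)%:E | s in [set: T]].

(* Main.v *)
Require Import Defs.
From HB Require Import structures.
From mathcomp Require Import all_boot all_order all_algebra finmap.
From mathcomp Require Import all_classical all_reals all_analysis.
Import Order.TTheory GRing.Theory Num.Theory.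

Lemma head_filter_prop (T : eqType) (x0 : T) (a : pred T) (s : seq T) :
  has a s -> a (head x0 (seq.filter a s)) && (head x0 (seq.filter a s) \in s).
Proof.
elim: s => //= y s IH; case ay: (a y) => /= h.
  by rewrite ay mem_head.
by have /andP[-> hs] := IH h; rewrite in_cons hs orbT.
Qed.

Lemma tree_walk (V : choiceType) (k : nat) (adj : rel V) :
  (1 <= k)%N -> is_regular_tree k adj ->
  forall x : V, exists w : nat -> V, w 0%N = x /\ injective w.
Proof.
move=> hk [irr sym deg conn acyc] x.
pose N y := sval (cid (deg y)).
pose next p c := head c [seq z <- N c | z != p].
have hnext : forall p c, adj c (next p c) && (next p c != p).
  move=> p c; rewrite /next.
  have [u sz hadj] := svalP (cid (deg c)).
  rewrite -/(N c) in u sz hadj.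
  have hh : has (fun z => z != p) (N c).
    apply: contraT => /hasPn hn.
    have : (N c) = nseq (size (N c)) p.
      apply/all_pred1P/allP => z /hn; by rewrite negbK.
    rewrite sz => e; move: u; rewrite e /=.
    by rewrite -(prednK hk) /= inE eqxx.
  have [h1 h2] := andP (@head_filter_prop _ c _ _ hh).
  by rewrite hadj h1 h2.
pose f (q : V * V) := (q.2, next q.1 q.2).
pose st n := iter n f (x, next x x).
pose w n := (st n).1.
have w1 : forall n, w n.+1 = (st n).2 by move=> n; rewrite /w /st iterS.
have w2 : forall n, w n.+2 = next (w n) (w n.+1).
  by move=> n; rewrite w1 /st iterS /= -/(st n) -w1.
have wadj : forall n, adj (w n) (w n.+1).
  case=> [|n]; first by rewrite w1 /=; case/andP: (hnext x x).
  by rewrite w2; case/andP: (hnext (w n) (w n.+1)).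
have wnb : forall n, w n.+2 != w n.
  by move=> n; rewrite w2; case/andP: (hnext (w n) (w n.+1)).
have key : forall n i, [/\ path adj (w i) (map w (iota i.+1 n)),
    nonbacktracking (w i) (map w (iota i.+1 n)) &
    last (w i) (map w (iota i.+1 n)) = w (i + n)%N].
  elim=> [|n IH] i; first by rewrite addn0.
  have [h1 h2 h3] := IH i.+1.
  split.
  - by rewrite /= wadj.
  - move: h2; case: n {IH h1 h3} => [|n] //= ->; by rewrite eq_sym wnb.
  - by rewrite /= h3 addSnnS.
have neq : forall i j, (i < j)%N -> w i != w j.
  move=> i j lij.
  have [n ->] : exists n, j = (i + n.+1)%N.
    by exists (j - i.+1)%N; rewrite addnS -addSn subnKC.
  apply/negP => /eqP eij.
  have [h1 h2 h3] := key n.+1 i.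
  move: eij; rewrite -h3 => eij.
  by have := acyc _ _ h1 h2 (esym eij).
exists w; split; first by [].
move=> i j eij; case: (ltngtP i j) => // h.
  by have := neq _ _ h; rewrite eij eqxx.
by have := neq _ _ h; rewrite eij eqxx.
Qed.

Local Open Scope ring_scope.

Lemma bcount_const (V : choiceType) (L : {fset V}) (j : nat) :
  (0 < #|` L|)%N -> bcount L (fun _ => 0%:Z) j = (j == #|` L|)%N.
Proof.
move=> L0.
have hm : forall v, mult L (fun _ => 0%:Z) v = if v == 0 then #|` L| else 0%N.
  move=> v; rewrite /mult; case: (eqVneq v 0) => [_|_].
    by congr (#|` _|); apply/fsetP => y; rewrite !inE andbT.
  apply/eqP; rewrite cardfs_eq0; apply/eqP/fsetP => y.
  by rewrite !inE andbF.
have [y0 y0L] : exists y, y \in L.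
  by apply/fset0Pn; rewrite -cardfs_gt0.
rewrite /bcount.
have -> : [fset (0:int) | _ in L]%fset = [fset (0:int)]%fset.
  apply/fsetP => v; rewrite inE; apply/imfsetP/eqP => [[y _ ->]//|->].
  by exists y0.
case: (eqVneq j #|` L|) => [ej|hj].
  rewrite /=; apply/eqP; rewrite eqn_leq; apply/andP; split.
    by rewrite -(cardfs1 (0:int)); apply: fsubset_leq_card; apply/fsubsetP => v; rewrite !inE => /andP[].
  by rewrite cardfs_gt0; apply/fset0Pn; exists 0; rewrite !inE hm eqxx ej eqxx andbT.
apply/eqP; rewrite cardfs_eq0; apply/eqP/fsetP => v; rewrite !inE hm.
by case: eqP => //= _; rewrite eq_sym (negbTE hj).
Qed.

Lemma ewens_const (R : realType) (theta : R) (V : choiceType) (L : {fset V}) :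
  (0 < #|` L|)%N -> ewensU theta L (fun _ => 0%:Z) = ln (theta / (#|` L|)%:R).
Proof.
move=> L0; rewrite /ewensU.
under eq_bigr => j _ do rewrite bcount_const //.
rewrite big_nat_recr //= eqxx /= ln1 subr0 mul1r.
rewrite big_nat_cond big1 ?add0r // => j /andP[/andP[_ hj] _].
by rewrite (ltn_eqF hj) /= mul0r ln1 subr0.
Qed.

Local Open Scope classical_set_scope.
Local Open Scope ring_scope.

Theorem lemma3p2 (R : realType) (k : nat) (hk : (1 <= k)%N)
  (V : choiceType) (adj : rel V) (htree : is_regular_tree k adj)
  (theta : R) (htheta : 0 < theta) :
  forall x : V,
    esum [set L : {fset V} | x \in L]
         (fun L => supnorm (ewensU theta L)) = +oo%E.
Proof.
move=> x.
have [w [w0 winj]] := @tree_walk V k adj hk htree x.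
pose N := (Num.trunc (theta * expR 1)).+1.
pose Lf n := [fset z in map w (iota 0 (n + N).+1)]%fset.
have cardL n : #|` Lf n| = (n + N).+1.
  by rewrite card_fseq undup_id ?size_map ?size_iota // map_inj_uniq // iota_uniq.
have xL n : x \in Lf n.
  by rewrite -w0 !inE eqxx.
have bound n : (1 <= supnorm (ewensU theta (Lf n)))%E.
  rewrite /supnorm; apply: le_ereal_sup_tmp.
  exists (`|ewensU theta (Lf n) (fun=> 0%:Z)|%:E); first by exists (fun _ => 0%:Z).
  rewrite lee_fin ewens_const ?cardL //.
  set m := (n + N).+1.
  have m0 : 0 < m%:R :> R by rewrite ltr0n.
  rewrite -normrN; apply: le_trans (ler_norm _).
  rewrite lerNr -[X in _ <= X](expRK (-1)) ler_ln ?posrE ?divr_gt0 ?expR_gt0 //.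
  rewrite ler_pdivrMr // expRN mulrC ler_pdivlMr ?expR_gt0 //.
  apply: le_trans (ltW (truncnS_gt _)) _.
  by rewrite ler_nat /m /N addnS !ltnS leqW // leq_addl.
have H : forall M : nat, ((M%:R)%:E <= esum [set L : {fset V} | x \in L]
         (fun L => supnorm (ewensU theta L)))%E.
  move=> M.
  apply: (@le_trans _ _ (esum (Lf @` setT) (fun L => supnorm (ewensU theta L)))).
    rewrite esum_image; last first.
      move=> i j _ _ /(congr1 (fun L => #|` L|)); rewrite !cardL.
      by move=> [] /eqP; rewrite eqn_add2r => /eqP.
    rewrite -nneseries_esumT; last by move=> i; apply: le_trans (bound i).
    apply: le_trans (nneseries_lim_ge M _); last by move=> i _ _; apply: le_trans (bound i).
    apply: (@le_trans _ _ (\sum_(0 <= i < M) (1%:E))%R).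
      by rewrite sumEFin sumr_const_nat subn0.
    by apply: lee_sum => i _; exact: bound.
  apply: ereal_sup_le => _ [A [finA AS] <-]; exists A => //; split => //.
  by move=> L /AS [n _ <-]; exact: xL.
move: H; set s := esum _ _ => H.
case: s H => [r H|//|H].
  have := H (Num.trunc r).+1; rewrite lee_fin => h.
  by have := lt_le_trans (truncnS_gt r) h; rewrite ltxx.
by have := H 0%N.
Qed.
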